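(* Let $G=(V,E)$ be a connected undirected graph with labeled nodes $1,\dots,n_l$ ($1\le n_l<n$) and edge costs $d_e>0$, and let $p$ be an unlabeled node. Suppose there is a unique path of minimal total cost $\sum_e d_e$ among all paths from the set of labeled nodes to $p$, and let $i^*(p)$ be its labeled endpoint. Then as $\lambda\to\infty$, the flow-based prediction weights satisfy $w_{i^*(p)}(p)\to1$ and $w_i(p)\to0$ for all $i\ne i^*(p)$; i.e. the flow-based prediction converges to the 1-nearest-neighbor prediction $f(i^*(p))$ (nearest with respect to shortest-path distance with edge lengths $d_e$).
   Context: Orient each edge arbitrarily; let $A$ be the $n\times m$ signed incidence matrix ($A_{ie}=+1$, $A_{je}=-1$ for $e$ oriented from $i$ to $j$), $A_l$ its rows $1,\dots,n_l$, $A_u$ its remaining rows. For unlabeled $p$, $\vec b_p\in\mathbb R^{n-n_l}$ is zero except $-1$ at the entry of $p$. For $\lambda\ge0$, the flow $\vec x$ is the unique minimizer of $\frac12\sum_{e=1}^m d_e(x_e^2+\lambda|x_e|)$ subject to $A_u\vec x=\vec b_p$; the weights are $\vec w(p)=A_l\vec x$ and the prediction is $f(p)=\sum_{i=1}^{n_l}w_i(p)f(i)$. *)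

(* Defs.v *)
From HB Require Import structures.
From mathcomp Require Import all_boot all_order all_algebra.
Set Implicit Arguments. Unset Strict Implicit. Unset Printing Implicit Defensive.
Import Order.TTheory GRing.Theory Num.Theory.
Local Open Scope ring_scope.

(* Graph on nodes 'I_n with m edges; edge e is oriented from src e to dst e.
   Labeled nodes are those with index < nl. *)

Definition incidence (R : ringType) (n m : nat) (src dst : 'I_m -> 'I_n)
  : 'M[R]_(n, m) :=
  \matrix_(i < n, e < m) ((i == src e)%:R - (i == dst e)%:R).

Definition simple_graph (n m : nat) (src dst : 'I_m -> 'I_n) : Prop :=
  (forall e, src e != dst e) /\
  (forall e e', (src e == src e') && (dst e == dst e')
                || (src e == dst e') && (dst e == src e') -> e = e').

Definition is_path (n m : nat) (src dst : 'I_m -> 'I_n)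
  (vs : seq 'I_n) (es : seq 'I_m) : Prop :=
  size vs = (size es).+1 /\ uniq vs /\
  forall k x0 e0, (k < size es)%N ->
    let e := nth e0 es k in
    (src e == nth x0 vs k) && (dst e == nth x0 vs k.+1)
    || (dst e == nth x0 vs k) && (src e == nth x0 vs k.+1).

Definition connected_graph (n m : nat) (src dst : 'I_m -> 'I_n) : Prop :=
  forall u v : 'I_n, exists vs es,
    is_path src dst vs es /\ head u vs = u /\ last u vs = v.

Definition path_cost (R : nmodType) (m : nat) (d : 'I_m -> R) (es : seq 'I_m) : R :=
  \sum_(e <- es) d e.

Definition labeled_path_to (n m nl : nat) (src dst : 'I_m -> 'I_n) (p : 'I_n)
  (vs : seq 'I_n) (es : seq 'I_m) : Prop :=
  is_path src dst vs es /\ (head p vs < nl)%N /\ last p vs = p.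

Definition unique_shortest_labeled_path (R : numDomainType) (n m nl : nat)
  (src dst : 'I_m -> 'I_n) (d : 'I_m -> R) (p : 'I_n)
  (vs : seq 'I_n) (es : seq 'I_m) : Prop :=
  labeled_path_to nl src dst p vs es /\
  forall vs' es', labeled_path_to nl src dst p vs' es' ->
    path_cost d es <= path_cost d es' /\
    (path_cost d es' = path_cost d es -> vs' = vs /\ es' = es).

Definition flow_objective (R : numDomainType) (m : nat) (d : 'I_m -> R) (lam : R)
  (x : 'cV[R]_m) : R :=
  2^-1 * \sum_(e < m) d e * (x e 0 ^+ 2 + lam * `|x e 0|).

(* A_u x = b_p : for unlabeled rows i (i >= nl), (A x)_i = -1 if i = p, else 0 *)
Definition unlabeled_constraint (R : ringType) (n m nl : nat)
  (src dst : 'I_m -> 'I_n) (p : 'I_n) (x : 'cV[R]_m) : Prop :=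
  forall i : 'I_n, (nl <= i)%N ->
    (incidence R src dst *m x) i 0 = - (i == p)%:R.

Definition is_flow (R : numDomainType) (n m nl : nat) (src dst : 'I_m -> 'I_n)
  (d : 'I_m -> R) (p : 'I_n) (lam : R) (x : 'cV[R]_m) : Prop :=
  unlabeled_constraint nl src dst p x /\
  forall y, unlabeled_constraint nl src dst p y ->
    flow_objective d lam x <= flow_objective d lam y.

Definition flow_weight (R : ringType) (n m : nat) (src dst : 'I_m -> 'I_n)
  (x : 'cV[R]_m) (i : 'I_n) : R :=
  (incidence R src dst *m x) i 0.

(* Main.v *)
Require Import Defs.
From HB Require Import structures.
From mathcomp Require Import all_boot all_order all_algebra.
From mathcomp Require Import lra.
From Stdlib Require Import Classical_Prop.
Set Implicit Arguments. Unset Strict Implicit. Unset Printing Implicit Defensive.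
Import Order.TTheory GRing.Theory Num.Theory.
Local Open Scope ring_scope.

Lemma ex_argmin (R : realDomainType) (T : eqType) (s : seq T) (P : T -> Prop) (f : T -> R) :
  (exists a, a \in s /\ P a) ->
  exists a, [/\ a \in s, P a & forall b, b \in s -> P b -> f a <= f b].
Proof.
elim: s => [|x s IH]; first by case=> a [].
case=> a [ain Pa].
case: (classic (exists a, a \in s /\ P a)) => [/IH [b [bin Pb bmin]]|nex].
  case: (classic (P x)) => Px.
    have [le|lt] := leP (f b) (f x).
      exists b; split => //; first by rewrite inE bin orbT.
      move=> c; rewrite inE => /orP [/eqP -> //|cin Pc]; exact: bmin.
    exists x; split; [by rewrite inE eqxx | done | ].
    move=> c; rewrite inE => /orP [/eqP -> //|cin Pc].
    apply: le_trans (bmin _ cin Pc); exact: ltW.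
  exists b; split => //; first by rewrite inE bin orbT.
  move=> c; rewrite inE => /orP [/eqP -> //|cin Pc]; exact: bmin.
have ax : a = x.
  move: ain; rewrite inE => /orP [/eqP //|ain]; by case: nex; exists a.
subst a; exists x; split; [by rewrite inE eqxx | done | ].
move=> c; rewrite inE => /orP [/eqP -> //|cin Pc].
by case: nex; exists c.
Qed.

Fixpoint seqs (T : finType) (L : nat) : seq (seq T) :=
  if L is L'.+1 then [::] :: [seq x :: s | x <- enum T, s <- seqs T L'] else [:: [::]].

Lemma mem_seqs (T : finType) L (s : seq T) : (size s <= L)%N -> s \in seqs T L.
Proof.
elim: L s => [|L IH] [|x s] //=; rewrite ?inE //.
rewrite ltnS => hs; apply/orP; right.
apply: (allpairs_f (fun x s => x :: s)); [by rewrite mem_enum | exact: IH].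
Qed.

Section Graph.
Variables (R : realFieldType) (n m nl : nat) (src dst : 'I_m -> 'I_n) (d : 'I_m -> R).
Hypothesis dpos : forall e, 0 < d e.

Definition LP (v : 'I_n) (P : seq 'I_n * seq 'I_m) :=
  is_path src dst P.1 P.2 /\ (head v P.1 < nl)%N /\ last v P.1 = v.

Definition cands := [seq (a, b) | a <- seqs 'I_n n, b <- seqs 'I_m n].

Lemma LP_cands v P : LP v P -> P \in cands.
Proof.
case: P => vs es [[hs [hu _]] _].
have hvs : (size vs <= n)%N.
  by move/card_uniqP: hu => <-; rewrite -[X in (_ <= X)%N](card_ord n) max_card.
apply: (allpairs_f (fun a b => (a, b))); apply: mem_seqs => //.
by move: hvs; rewrite hs => /ltnW.
Qed.

Lemma cost_ge0 (es : seq 'I_m) : 0 <= path_cost d es.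
Proof. by apply: sumr_ge0 => e _; exact: ltW. Qed.

Lemma head_nonnil (T : eqType) (a b : T) (s : seq T) : s != [::] -> head a s = head b s.
Proof. by case: s. Qed.

Lemma path_nonnil vs es : is_path src dst vs es -> vs != [::].
Proof. by case: vs => [[]|]. Qed.

Variable off : 'I_n -> R.
Definition pcost v (P : seq 'I_n * seq 'I_m) := off (head v P.1) + path_cost d P.2.

Hypothesis reach : forall v, exists P, LP v P.

Lemma potential_ex : exists phi : 'I_n -> R, forall v,
  (exists P, LP v P /\ phi v = pcost v P) /\ (forall P, LP v P -> phi v <= pcost v P).
Proof.
suff H : forall v, exists r : R, (exists P, LP v P /\ r = pcost v P) /\ (forall P, LP v P -> r <= pcost v P).
  have [phi Hphi] := fin_all_exists H; by exists phi.
move=> v.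
have [P hP] := reach v.
have [Q [Qin LQ Qmin]] := @ex_argmin R _ cands (LP v) (pcost v)
   (ex_intro _ P (conj (LP_cands hP) hP)).
exists (pcost v Q); split; first by exists Q.
move=> P' LP'; apply: Qmin => //; exact: LP_cands LP'.
Qed.

End Graph.

Section Lip.
Variables (R : realFieldType) (n m nl : nat) (src dst : 'I_m -> 'I_n) (d : 'I_m -> R).
Hypothesis dpos : forall e, 0 < d e.
Variable off : 'I_n -> R.
Variable phi : 'I_n -> R.
Hypothesis Hphi : forall v,
  (exists P, LP nl src dst v P /\ phi v = pcost d off v P) /\
  (forall P, LP nl src dst v P -> phi v <= pcost d off v P).

Lemma cost_take k es : path_cost d (take k es) <= path_cost d es.
Proof.
rewrite /path_cost -{2}(cat_take_drop k es) big_cat /= lerDl.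
exact: cost_ge0.
Qed.

Lemma lip_step e a b :
  (src e == a) && (dst e == b) || (dst e == a) && (src e == b) ->
  phi b <= phi a + d e.
Proof.
move=> hab.
have [[[vs es] [[[hs [hu hc]] [hh hl]] ->]] _] := Hphi a.
rewrite /= in hs hu hc hh hl.
have vsnn : vs != [::] by case: (vs) hs.
case: (boolP (b \in vs)) => bin.
  set k := index b vs.
  have kl : (k < size vs)%N by rewrite index_mem.
  have LQ : LP nl src dst b (take k.+1 vs, take k es).
    split; [split; [|split]|split] => /=.
    - rewrite !size_take hs; move: kl; rewrite hs ltnS => kl.
      by rewrite ltnS; case: ltngtP kl => // ->.
    - exact: take_uniq.
    - move=> j x0 e0; rewrite size_take => hj.
      have hjk : (j < k)%N by case: ifP hj => // /negbT; rewrite -leqNgt => h1 h2; exact: leq_trans h2 h1.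
      have hje : (j < size es)%N by case: ifP hj => // h1 h2; exact: ltn_trans h2 h1.
      rewrite !nth_take ?ltnS //; last by apply: ltnW.
      exact: hc.
    - by case: (vs) hh vsnn.
    - rewrite -nth_last size_take.
      have -> : (if (k.+1 < size vs)%N then k.+1 else size vs) = k.+1.
        by case: ifP => // /negbT; rewrite -leqNgt => h; apply/eqP; rewrite eqn_leq h kl.
      by rewrite nth_take // nth_index.
  apply: le_trans ((proj2 (Hphi b)) _ LQ) _.
  rewrite /pcost /= -addrA lerD //.
    by case: (vs) vsnn.
  apply: le_trans (cost_take k es) _; rewrite lerDl; exact: ltW.
have LQ : LP nl src dst b (rcons vs b, rcons es e).
  split; [split; [|split]|split] => /=.
  - by rewrite !size_rcons hs.
  - by rewrite rcons_uniq bin.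
  - move=> j x0 e0; rewrite size_rcons ltnS leq_eqVlt => /orP [/eqP ->|hj].
      rewrite !nth_rcons ltnn eqxx -hs ltnn eqxx hs ltnSn.
      have -> : nth x0 vs (size es) = a.
        by rewrite -hl -nth_last hs /=; apply: set_nth_default; rewrite hs.
      exact: hab.
    rewrite !nth_rcons hj hs (ltn_trans hj) // ltnS hj.
    exact: hc.
  - by case: (vs) hh vsnn.
  - by rewrite last_rcons.
apply: le_trans ((proj2 (Hphi b)) _ LQ) _.
rewrite /pcost /= /path_cost big_rcons /= addrA lerD //.
by case: (vs) vsnn.
Qed.

Lemma lip e : `|phi (src e) - phi (dst e)| <= d e.
Proof.
rewrite ler_norml.
have h1 : phi (dst e) <= phi (src e) + d e by apply: lip_step; rewrite !eqxx.
have h2 : phi (src e) <= phi (dst e) + d e by apply: lip_step; rewrite !eqxx orbT.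
apply/andP; split; lra.
Qed.

End Lip.

Lemma sum_pick (R : pzRingType) (T : finType) (f : T -> R) (a : T) :
  \sum_v f v * (v == a)%:R = f a.
Proof.
rewrite (bigD1 a) //= eqxx mulr1 big1 ?addr0 // => v /negbTE ->.
by rewrite mulr0.
Qed.

Section Dual.
Variables (R : realFieldType) (n m nl : nat) (src dst : 'I_m -> 'I_n) (d : 'I_m -> R).
Variable p : 'I_n.
Hypothesis pl : (nl <= p)%N.

Lemma Amul (y : 'cV[R]_m) v :
  (incidence R src dst *m y) v 0 = \sum_e ((v == src e)%:R - (v == dst e)%:R) * y e 0.
Proof. by rewrite mxE; apply: eq_bigr => e _; rewrite mxE. Qed.

Lemma dual_ineq (phi : 'I_n -> R) (Lip : forall e, `|phi (src e) - phi (dst e)| <= d e)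
  (y : 'cV[R]_m) : unlabeled_constraint nl src dst p y ->
  phi p - \sum_(j < n | (j < nl)%N) phi j * (incidence R src dst *m y) j 0
  <= \sum_e d e * `|y e 0|.
Proof.
move=> hy.
have e1 : \sum_v phi v * (incidence R src dst *m y) v 0 =
          \sum_e (phi (src e) - phi (dst e)) * y e 0.
  under eq_bigr => v _ do rewrite Amul mulr_sumr.
  rewrite exchange_big /=; apply: eq_bigr => e _.
  under eq_bigr => v _ do rewrite mulrA.
  rewrite -mulr_suml; congr (_ * _).
  under eq_bigr => v _ do rewrite mulrBr.
  by rewrite sumrB !sum_pick.
have e2 : \sum_v phi v * (incidence R src dst *m y) v 0 =
   \sum_(j < n | (j < nl)%N) phi j * (incidence R src dst *m y) j 0 - phi p.
  rewrite (bigID (fun j : 'I_n => (j < nl)%N)) /=; congr (_ + _).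
  rewrite (bigD1 p) /=; last by rewrite -leqNgt.
  rewrite hy // eqxx mulrN1 big1 ?addr0 // => v /andP [hv /negbTE vp].
  by rewrite hy; [rewrite vp oppr0 mulr0 | rewrite leqNgt].
have -> : phi p - \sum_(j < n | (j < nl)%N) phi j * (incidence R src dst *m y) j 0
   = \sum_e (phi (dst e) - phi (src e)) * y e 0.
  have : \sum_e (phi (dst e) - phi (src e)) * y e 0 = - \sum_e (phi (src e) - phi (dst e)) * y e 0.
    by rewrite -sumrN; apply: eq_bigr => e _; rewrite -mulNr opprB.
  move=> ->; rewrite -e1 e2; lra.
apply: ler_sum => e _.
apply: le_trans (ler_norm _) _; rewrite normrM ler_wpM2r //.
by rewrite distrC.
Qed.

End Dual.

Section PathFlow.
Variables (R : realFieldType) (n m : nat) (src dst : 'I_m -> 'I_n) (d : 'I_m -> R).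
Hypothesis dpos : forall e, 0 < d e.
Hypothesis noloop : forall e, src e != dst e.
Variables (p : 'I_n) (vs : seq 'I_n) (es : seq 'I_m) (e0 : 'I_m).
Hypothesis hP : is_path src dst vs es.

Definition sg k : R := if src (nth e0 es k) == nth p vs k then 1 else -1.
Definition xs : 'cV[R]_m :=
  \col_e \sum_(k < size es) (e == nth e0 es k)%:R * sg k.

Lemma xs_A v : (incidence R src dst *m xs) v 0 =
  (v == head p vs)%:R - (v == last p vs)%:R.
Proof.
case: hP => hs [hu hc].
rewrite Amul.
under eq_bigr => e _ do rewrite mxE mulr_sumr.
rewrite exchange_big /=.
have step : forall k : 'I_(size es),
  \sum_e ((v == src e)%:R - (v == dst e)%:R) * ((e == nth e0 es k)%:R * sg k)
  = (v == nth p vs k)%:R - (v == nth p vs k.+1)%:R.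
  move=> k.
  under eq_bigr => e _ do rewrite mulrA.
  rewrite -mulr_suml sum_pick /sg.
  have := hc k p e0 (ltn_ord k); rewrite /=.
  set E := nth e0 es k.
  case/orP => /andP [/eqP h1 /eqP h2]; rewrite h1 h2 ?eqxx; first by rewrite mulr1.
  have -> : (nth p vs k.+1 == nth p vs k) = false.
    by apply/negbTE; rewrite -h1 -h2 noloop.
  by rewrite mulrN1 opprB.
under eq_bigr => k _ do rewrite step.
rewrite -(big_mkord xpredT (fun k => (v == nth p vs k)%:R - (v == nth p vs k.+1)%:R)).
have : \sum_(0 <= k < size es) ((v == nth p vs k)%:R - (v == nth p vs k.+1)%:R)
   = - \sum_(0 <= k < size es) ((v == nth p vs k.+1)%:R - (v == nth p vs k)%:R :> R).
  by rewrite -sumrN; apply: eq_bigr => k _; rewrite opprB.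
move=> ->; rewrite telescope_sumr // nth0 -[size es]/((size es).+1.-1) -hs nth_last.
by rewrite opprB.
Qed.

Lemma xs_F : \sum_e d e * `|xs e 0| <= path_cost d es.
Proof.
have h : forall e, `|xs e 0| <= \sum_(k < size es) (e == nth e0 es k)%:R.
  move=> e; rewrite mxE; apply: le_trans (ler_norm_sum _ _ _) _.
  apply: ler_sum => k _; rewrite normrM /sg.
  by case: ifP => _; rewrite ?normrN normr1 mulr1 normr_nat.
apply: le_trans (_ : \sum_e d e * \sum_(k < size es) (e == nth e0 es k)%:R <= _).
  apply: ler_sum => e _; apply: ler_wpM2l => //; exact: ltW.
under eq_bigr => e _ do rewrite mulr_sumr.
rewrite exchange_big /= /path_cost (big_nth e0) big_mkord.
by apply: ler_sum => k _; rewrite sum_pick.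
Qed.

End PathFlow.
Unset Implicit Arguments. Set Strict Implicit.

Lemma objE (R : realFieldType) m (d : 'I_m -> R) lam (y : 'cV[R]_m) :
  flow_objective d lam y =
  2^-1 * (\sum_e d e * y e 0 ^+ 2 + lam * \sum_e d e * `|y e 0|).
Proof.
rewrite /flow_objective; congr (_ * _); rewrite mulr_sumr -big_split /=.
apply: eq_bigr => e _; rewrite mulrDr; congr (_ + _); exact: mulrCA.
Qed.

Theorem proposition2 (R : realFieldType) (n m nl : nat)
  (src dst : 'I_m -> 'I_n) (d : 'I_m -> R) (p : 'I_n)
  (vs : seq 'I_n) (es : seq 'I_m) (x : R -> 'cV[R]_m) :
  (1 <= nl)%N -> (nl < n)%N ->
  simple_graph src dst -> connected_graph src dst ->
  (forall e, 0 < d e) ->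
  (nl <= p)%N ->
  unique_shortest_labeled_path nl src dst d p vs es ->
  (forall lam, 0 <= lam -> is_flow nl src dst d p lam (x lam)) ->
  forall i : 'I_n, (i < nl)%N ->
    forall eps : R, 0 < eps -> exists Lam : R, forall lam, Lam <= lam ->
      `| flow_weight src dst (x lam) i - (i == head p vs)%:R | < eps.
Proof.
move=> h1nl hnln [noloop _] hconn dpos hpl [hLP huniq] hflow i hi eps heps.
set D := path_cost d es.
set del : R := (i == head p vs)%:R.
have [hpath [hhead hlast]] := hLP.
have [e0 es0] : exists e0, es = e0 :: behead es.
  case: (es) hpath hhead hlast => [|e0 es'] /=; last by exists e0.
  case=> hs _; case: (vs) hs => [|a [|b s]] //= _ ha hap.
  by move: hpl; rewrite -hap leqNgt ha.
have n0 : (0 < n)%N by apply: leq_ltn_trans hnln.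
have reach : forall v, exists P, LP nl src dst v P.
  move=> v; have [vs' [es' [hp' [hh' hl']]]] := hconn (Ordinal n0) v.
  exists (vs', es'); split => //=.
  have nn := path_nonnil hp'.
  split; last by case: (vs') nn hl'.
  by case: (vs') nn hh' => //= a s _ ->.
have [dm [dm0 dmle]] : exists dm, 0 < dm /\ forall e, dm <= d e.
  have [a [_ _ amin]] := @ex_argmin R _ (enum 'I_m) (fun _ => True) d
    (ex_intro _ e0 (conj (mem_enum _ e0) I)).
  by exists (d a); split => // e; apply: amin; rewrite ?mem_enum.
have costne : forall e es', dm <= path_cost d (e :: es').
  move=> e es'; rewrite /path_cost big_cons.
  by apply: le_trans (dmle e) _; rewrite lerDl; apply: cost_ge0.
have [g [g0 gle]] : exists g, 0 < g /\ forall P, LP nl src dst p P -> P <> (vs, es) ->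
    D + g <= path_cost d P.2.
  case: (classic (exists P, P \in cands n m /\ (LP nl src dst p P /\ P <> (vs, es)))).
    move=> ex.
    have [Q [Qin [LQ Qne] Qmin]] := @ex_argmin R _ (cands n m)
       (fun P => LP nl src dst p P /\ P <> (vs, es)) (fun P => path_cost d P.2) ex.
    exists (path_cost d Q.2 - D); split.
      case: Q Qin LQ Qne Qmin => vs' es' _ LQ Qne _.
      have [hle heq] := huniq vs' es' LQ.
      rewrite subr_gt0 lt_neqAle hle andbT /=; apply/eqP => he.
      by apply: Qne; case: (heq (esym he)) => -> ->.
    move=> P LPP Pne; rewrite addrC subrK; apply: Qmin => //.
    exact: LP_cands LPP.
  move=> nex; exists 1; split => // P LPP Pne; case: nex; exists P; split => //.
  exact: LP_cands LPP.
have [t [t0 [tdm tg]]] : exists t : R, 0 < t /\ 2 * t <= dm /\ 2 * t <= g.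
  case: (leP dm g) => h; [exists (dm / 2) | exists (g / 2)]; split; lra.
have pot : forall s : R, `|s| <= t -> exists phi : 'I_n -> R,
   [/\ forall e, `|phi (src e) - phi (dst e)| <= d e,
       forall j : 'I_n, (j < nl)%N -> phi j = if j == i then s else 0 &
       D + s * del <= phi p].
  move=> s hs.
  set off := fun j : 'I_n => if j == i then s else 0.
  have offb : forall j, - t <= off j <= t.
    move=> j; rewrite /off; case: ifP => _; first by rewrite -ler_norml.
    by rewrite oppr_le0 ltW.
  have [phi Hphi] := potential_ex d off reach.
  exists phi; split.
  - exact: (@lip R n m nl src dst d dpos off phi Hphi).
  - move=> j hj; apply/eqP; rewrite eq_le; apply/andP; split.
      have LT : LP nl src dst j ([:: j], [::]).
        split; [split; [done | split; [done | by []]] | done].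
      apply: le_trans ((proj2 (Hphi j)) _ LT) _.
      by rewrite /pcost /= /path_cost big_nil addr0.
    have [[[vs' es'] [[[hs' _] [_ hl']] ->]] _] := Hphi j.
    rewrite /pcost /=; rewrite /= in hs' hl'.
    case: es' hs' => [|e' es'].
      case: vs' hl' => [|a [|b s']] //= -> _.
      by rewrite /path_cost big_nil addr0.
    move=> _; have := costne e' es'; have := offb j; have := offb (head j vs').
    rewrite -/(off j); lra.
  - have [[[vs' es'] [LP' ->]] _] := Hphi p.
    rewrite /pcost /=.
    case: (classic ((vs', es') = (vs, es))) => [[-> ->]|hne].
      rewrite /off /del (eq_sym i); case: (_ == _); rewrite ?mulr1 ?mulr0 /D; lra.
    have := gle _ LP' hne; rewrite /= => hc.
    have hsd : s * del <= t.
      rewrite /del; case: (_ == _); rewrite ?mulr1 ?mulr0; last exact: ltW.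
      by apply: le_trans (ler_norm _) hs.
    have := offb (head p vs'); lra.
set xst := xs R src p vs es e0.
have xfeas : unlabeled_constraint nl src dst p xst.
  move=> v hv; rewrite /xst (xs_A R noloop p e0 hpath) hlast.
  have -> : (v == head p vs) = false.
    by apply/negbTE; apply/eqP => hv'; move: hhead; rewrite -hv' ltnNge hv.
  by rewrite sub0r.
have xF : \sum_e d e * `|xst e 0| <= D.
  exact: (xs_F src dpos p vs es e0).
set Qs := \sum_e d e * xst e 0 ^+ 2.
have Qs0 : 0 <= Qs.
  by apply: sumr_ge0 => e _; apply: mulr_ge0; [apply: ltW | apply: sqr_ge0].
have est : forall lam, 0 <= lam -> forall s, `|s| <= t ->
    lam * (s * (del - flow_weight src dst (x lam) i)) <= Qs.
  move=> lam hl s hs.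
  have [phi [Lip phil phip]] := pot s hs.
  have [feas opt] := hflow lam hl.
  have hd := dual_ineq hpl Lip feas.
  have e3 : \sum_(j < n | (j < nl)%N) phi j * (incidence R src dst *m x lam) j 0
     = s * flow_weight src dst (x lam) i.
    rewrite (bigD1 i) //= phil // eqxx big1 ?addr0 // => j /andP [hj ji].
    by rewrite phil // (negbTE ji) mul0r.
  rewrite e3 in hd.
  have ho := opt xst xfeas; rewrite !objE in ho.
  have ho' : \sum_e d e * x lam e 0 ^+ 2 + lam * \sum_e d e * `|x lam e 0|
     <= Qs + lam * \sum_e d e * `|xst e 0|.
    by rewrite -(ler_pM2l (_ : 0 < 2^-1 :> R)) // invr_gt0.
  have hQ : 0 <= \sum_e d e * x lam e 0 ^+ 2.
    by apply: sumr_ge0 => e _; apply: mulr_ge0; [apply: ltW | apply: sqr_ge0].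
  have hF : lam * \sum_e d e * `|xst e 0| <= lam * D by apply: ler_wpM2l.
  move: hd phip ho' hQ hF hl.
  set F := \sum_e d e * `|x lam e 0|.
  set Fs := lam * \sum_e d e * `|xst e 0|.
  set Q := \sum_e d e * x lam e 0 ^+ 2.
  set w := flow_weight src dst (x lam) i.
  move=> *; nra.
exists (Qs / (t * eps) + 1) => lam hlam.
have q0 : 0 <= Qs / (t * eps) by apply: divr_ge0 => //; apply: mulr_ge0; apply: ltW.
have lam0 : 0 < lam by lra.
have nt : `|t| <= t by rewrite (gtr0_norm t0).
have nt' : `|- t| <= t by rewrite normrN (gtr0_norm t0).
have h1 := est lam (ltW lam0) t nt.
have h2 := est lam (ltW lam0) (- t) nt'.
have hq : Qs < lam * (t * eps).
  by rewrite -ltr_pdivrMr ?mulr_gt0 //; lra.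
move: h1 h2 hq; set w := flow_weight src dst (x lam) i => h1 h2 hq.
have c0 : 0 < lam * t by apply: mulr_gt0.
rewrite ltr_norml.
move: c0 h1 h2 hq; set c := lam * t; rewrite !mulrA mulrN mulNr -/c => c0 h1 h2 hq.
apply/andP; split; nra.
Qed.
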